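(* Fix $k\in\mathbb N$ and $s>0$. For every $\varepsilon>0$ there exists $\eta>0$ such that, for all sufficiently large $P$, all $R$ with $2\le R\le P^\eta$, all real $M\ge1$, all $Q$ with $1\le Q\le P^{k/2}$ and all integers $q$ with $1\le q\le Q$, one has \[ \int_{\mathfrak M_q(Q,P)}|f_q^\dagger(\alpha;P,M,R)|^s\,d\alpha\ll QM^sP^{\varepsilon-k}, \] with implied constant depending only on $\varepsilon,\eta,k,s$.
   Context: For real $P,R\ge1$, $\mathscr A(P,R)$ is the set of integers $n\in[1,P]$ all of whose prime divisors are at most $R$; $e(z)=e^{2\pi iz}$. For $q\in\mathbb N$, $u\mid q^\infty$ means every prime dividing $u$ divides $q$, and $\mathscr C_q(P,R)=\{n\in\mathscr A(P,R): n\mid q^\infty\}$. Define $f_q^\dagger(\alpha;P,M,R)=\sum_{v\in\mathscr A(M,R),\ (v,q)=1}\sum_{u\in\mathscr C_q(P/v,R)}e(\alpha(uv)^k)$. For $1\le q\le Q$, $\mathfrak M_q(Q,P)$ is the union over $0\le a\le q$ with $(a,q)=1$ of $\{\alpha\in[0,1):|q\alpha-a|\le QP^{-k}\}$. *)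

(* Defs.v *)
From HB Require Import structures.
From mathcomp Require Import all_boot all_order all_algebra.
From mathcomp Require Import all_classical all_reals all_analysis.
From mathcomp Require Import complex.
Set Implicit Arguments. Unset Strict Implicit. Unset Printing Implicit Defensive.
Import Order.TTheory GRing.Theory Num.Theory.
Local Open Scope ring_scope.

Section Defs.
Variable R : realType.

Definition ee (z : R) : R[i] :=
  Complex (cos (2 * pi * z)) (sin (2 * pi * z)).

Definition smooth (Rb : R) (n : nat) : bool :=
  all (fun p => (p%:R <= Rb)) (primes n).

Definition inA (P Rb : R) (n : nat) : bool :=
  [&& (0 < n)%N, (n%:R <= P) & smooth Rb n].

Definition divpinf (u q : nat) : bool := all (fun p => (p %| q)%N) (primes u).

Definition inC (q : nat) (P Rb : R) (n : nat) : bool := inA P Rb n && divpinf n q.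

(* The ranges 0 <= v <= trunc M and
   0 <= u <= trunc (P / v) contain all admissible v, u (which satisfy
   v <= M, u <= P/v); the filters select exactly A(M,Rb) and C_q(P/v,Rb). *)
Definition fdag (k q : nat) (alpha P M Rb : R) : R[i] :=
  \sum_(v < (Num.truncn M).+1 | inA M Rb v && coprime v q)
    \sum_(u < (Num.truncn (P / v%:R)).+1 | inC q (P / v%:R) Rb u)
      ee (alpha * ((u * v)%N%:R) ^+ k).

Definition majarc (k q : nat) (Q P : R) : set R :=
  [set alpha | 0 <= alpha < 1 /\
    exists a : nat, [/\ (a <= q)%N, coprime a q &
       `| q%:R * alpha - a%:R | <= Q * P ^- k]].

End Defs.

(* Main.v *)
Require Import Defs.
From HB Require Import structures.
From mathcomp Require Import all_boot all_order all_algebra.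
From mathcomp Require Import all_classical all_reals all_analysis.
From mathcomp Require Import complex.
From mathcomp Require Import ring lra.
Import Order.TTheory GRing.Theory Num.Theory.
Local Open Scope ring_scope.

Section Helpers.
Variable R : realType.

Lemma powR_prod (I : Type) (r : seq I) (F : I -> R) (a : R) :
  (forall i, 0 <= F i) -> (\prod_(i <- r) F i) `^ a = \prod_(i <- r) (F i `^ a).
Proof.
move=> F0; elim: r => [|x r IH]; first by rewrite !big_nil powR1.
rewrite !big_cons powRM ?IH //; apply: prodr_ge0 => i _; exact: F0.
Qed.

Lemma powR_expn (x : R) (n : nat) (a : R) : 0 <= x ->
  (x ^+ n) `^ a = (x `^ a) ^+ n.
Proof.
move=> x0; rewrite -powR_mulrn ?powR_ge0 // -powRrM mulrC powRrM powR_mulrn //.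
exact: powR_ge0.
Qed.

Lemma geom_le (r : R) (N : nat) : 0 <= r -> r < 1 ->
  \sum_(j < N) r ^+ j <= (1 - r)^-1.
Proof.
move=> r0 r1.
have h1 : 0 < 1 - r by rewrite subr_gt0.
have E : \sum_(j < N) r ^+ j = (1 - r ^+ N) / (1 - r).
  apply: (mulIf (lt0r_neq0 h1)) => //.
  rewrite divfK ?lt0r_neq0 //.
  have := subrX1 r N.
  by move=> H; rewrite -[1 - r ^+ N]opprB H -mulNr opprB mulrC.
rewrite E -[leRHS]mul1r ler_pM2r ?invr_gt0 // gerBl exprn_ge0 //.
Qed.

End Helpers.

Lemma decomp_seq (u q : nat) : (0 < q)%N -> (0 < u)%N -> divpinf u q ->
  (\prod_(p <- primes q) p ^ logn p u)%N = u.
Proof.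
move=> q0 u0 /allP dv.
rewrite (bigID (fun p => p \in primes u)) /=.
rewrite [X in (_ * X)%N]big1 ?muln1; last first.
  move=> p pn; have : ~~ (0 < logn p u)%N by rewrite logn_gt0.
  by rewrite lt0n negbK => /eqP ->.
rewrite -big_filter.
rewrite (perm_big (primes u)); last first.
  apply: uniq_perm; [exact: filter_uniq (primes_uniq _) | exact: primes_uniq |].
  move=> p; rewrite mem_filter; apply/andP/idP => [[]//| H]; split=> //.
  move: (H); rewrite !mem_primes => /and3P[pp _ pu]; by rewrite pp q0 (dv p H).
rewrite {3}(prod_prime_decomp u0) prime_decompE big_map //.
Qed.

Lemma decomp_idx (u q : nat) : (0 < q)%N -> (0 < u)%N -> divpinf u q ->
  (\prod_(i < size (primes q)) (nth 0%N (primes q) i) ^ logn (nth 0%N (primes q) i) u)%N = u.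
Proof.
move=> q0 u0 dv; rewrite -[RHS](@decomp_seq u q q0 u0 dv) (big_nth 0%N) big_mkord //.
Qed.

Lemma nth_prime (q : nat) (i : 'I_(size (primes q))) : prime (nth 0%N (primes q) i).
Proof.
have := mem_nth 0%N (ltn_ord i); rewrite mem_primes => /andP[] //.
Qed.

Section Factor.
Variable R : realType.

Lemma factor_bound (d : R) (B : nat) (p : nat) : 0 < d -> 2 `^ (d^-1) <= B%:R ->
  (2 <= p)%N ->
  (1 - p%:R `^ (- d))^-1 <= (if (p < B)%N then 1 + (2 `^ d - 1)^-1 else 1) * p%:R `^ d.
Proof.
move=> d0 hB p2.
have a1 : 1 < 2 `^ d.
  have := @gt0_ltr_powR R d d0 1 2; rewrite powR1 => -> //; by rewrite ?nnegrE // ltr1n.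
set t := p%:R `^ d.
have ta : 2 `^ d <= t.
  apply: ge0_ler_powR; [exact: ltW | by rewrite nnegrE | by rewrite nnegrE | by rewrite ler_nat].
have t1 : 1 < t by apply: lt_le_trans ta.
have E : (1 - p%:R `^ (- d))^-1 = t / (t - 1).
  rewrite powRN -/t; field.
  by rewrite !gt_eqF ?subr_gt0 // (lt_trans ltr01).
rewrite E; case: ifP => pB.
  set b := (2 `^ d - 1)^-1.
  have b0 : 0 < b by rewrite invr_gt0 subr_gt0.
  have hb : b * (2 `^ d - 1) = 1 by rewrite mulVf // gt_eqF // subr_gt0.
  have h : 1 <= b * (t - 1).
    have : 0 <= b * (t - 2 `^ d) by rewrite mulr_ge0 ?subr_ge0 // ltW.
    nra.
  rewrite ler_pdivrMr ?subr_gt0 //; nra.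
have t2 : 2 <= t.
  have Bp : (B <= p)%N by rewrite leqNgt pB.
  have Bt : B%:R `^ d <= t.
    by apply: ge0_ler_powR; [exact: ltW| rewrite nnegrE // | rewrite nnegrE // | rewrite ler_nat].
  have h2 : (2 `^ d^-1) `^ d <= B%:R `^ d.
    by apply: ge0_ler_powR; [exact: ltW| rewrite nnegrE powR_ge0 // | rewrite nnegrE // | ].
  move: h2; rewrite -powRrM mulVf ?gt_eqF // powRr1 // => h2.
  exact: le_trans h2 Bt.
rewrite mul1r ler_pdivrMr ?subr_gt0 //; nra.
Qed.
End Factor.

Section Count.
Variable R : realType.

Lemma count_bound (d : R) : 0 < d -> exists C : R, 0 < C /\
  forall q N : nat, (0 < q)%N ->
  \sum_(u < N.+1 | (0 < u)%N && divpinf u q) (1 : R)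
    <= C * (N%:R `^ d) * (q%:R `^ d).
Proof.
move=> d0.
pose B : nat := (Num.truncn (2 `^ (d^-1) : R)).+1.
have hB : 2 `^ (d^-1) <= B%:R.
  have := truncn_le_nat (2 `^ (d^-1) : R) (Num.truncn (2 `^ (d^-1) : R)).
  by rewrite leqnn => /esym h; exact: ltW.
pose c : R := 1 + (2 `^ d - 1)^-1.
have a1 : 1 < 2 `^ d.
  have := @gt0_ltr_powR R d d0 1 2; rewrite powR1 => -> //; by rewrite ?nnegrE // ltr1n.
have c1 : 1 <= c by rewrite lerDl invr_ge0 subr_ge0 ltW.
exists (c ^+ B.+1); split; first by rewrite exprn_gt0 // (lt_le_trans ltr01).
move=> q N q0.
set S := primes q; set n := size S.
pose p (i : 'I_n) := nth 0%N S i.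
pose r (i : 'I_n) : R := (p i)%:R `^ (- d).
pose e (u : 'I_N.+1) : {ffun 'I_n -> 'I_N.+1} := [ffun i => inord (logn (p i) u)].
pose G (f : {ffun 'I_n -> 'I_N.+1}) : R := \prod_i r i ^+ f i.
pose A := [pred u : 'I_N.+1 | (0 < u)%N && divpinf u q].
have G0 f : 0 <= G f by apply: prodr_ge0 => i _; rewrite exprn_ge0 // powR_ge0.
have eK (u : 'I_N.+1) i : A u -> (e u i : nat) = logn (p i) u.
  move=> /andP[u0 _]; rewrite ffunE inordK //.
  exact: (ltn_trans (ltn_logl _ u0) (ltn_ord u)).
have Ge (u : 'I_N.+1) : A u -> 1 <= N%:R `^ d * G (e u).
  move=> Au; have /andP[u0 du] := Au.
  have -> : G (e u) = (u%:R) `^ (- d).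
    rewrite /G (eq_bigr (fun i => ((p i ^ logn (p i) u)%N%:R) `^ (- d))); last first.
      by move=> i _; rewrite eK // /r natrX powR_expn.
    rewrite -powR_prod; last by move=> i; exact: ler0n.
    by rewrite -natr_prod /p decomp_idx.
  rewrite powRN ler_pdivlMr ?powR_gt0 ?ltr0n // mul1r.
  apply: ge0_ler_powR; [exact: ltW | by rewrite nnegrE | by rewrite nnegrE | ].
  by rewrite ler_nat -ltnS ltn_ord.
have inj : {in A &, injective e}.
  move=> u v Au Av H; apply: val_inj => /=.
  have /andP[u0 du] := Au; have /andP[v0 dv] := Av.
  rewrite -(@decomp_idx u q q0 u0 du) -(@decomp_idx v q q0 v0 dv).
  apply: eq_bigr => i _.
  have h1 := eK u i Au; have h2 := eK v i Av; rewrite H in h1.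
  rewrite /p in h1 h2; by rewrite -h1 -h2.
have step1 : \sum_(u < N.+1 | (0 < u)%N && divpinf u q) (1 : R)
    <= N%:R `^ d * \sum_f G f.
  apply: (@le_trans _ _ (\sum_(u < N.+1 | (0 < u)%N && divpinf u q) N%:R `^ d * G (e u))).
    by apply: ler_sum => u Au; apply: Ge.
  rewrite -mulr_sumr; apply: ler_wpM2l; first exact: powR_ge0.
  have -> : \sum_(i : 'I_N.+1 | (0 < i)%N && divpinf i q) G (e i) = \sum_(i in A) G (e i).
    by apply: eq_bigl => i; rewrite inE.
  rewrite -(big_imset G inj) [leRHS](bigID (mem (e @: A))) /= lerDl.
  by apply: sumr_ge0 => f _.
have p2 (i : 'I_n) : (2 <= p i)%N by apply: prime_gt1; exact: nth_prime.
have r0 (i : 'I_n) : 0 <= r i by exact: powR_ge0.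
have r1 (i : 'I_n) : r i < 1.
  rewrite /r powRN invf_lt1 ?powR_gt0 ?ltr0n ?(leq_trans _ (p2 i)) //.
  have := @gt0_ltr_powR R d d0 1 (p i)%:R; rewrite powR1 => -> //; rewrite ?nnegrE //.
  by rewrite ltr1n.
have step2 : \sum_f G f <= \prod_(i : 'I_n) (1 - r i)^-1.
  rewrite /G -(bigA_distr_bigA (fun i (j : 'I_N.+1) => r i ^+ j)).
  apply: ler_prod => i _; apply/andP; split.
    by apply: sumr_ge0 => j _; rewrite exprn_ge0.
  exact: geom_le.
have step3 : \prod_(i : 'I_n) (1 - r i)^-1 <= c ^+ B.+1 * q%:R `^ d.
  apply: (@le_trans _ _ (\prod_(i : 'I_n)
      ((if (p i < B)%N then c else 1) * (p i)%:R `^ d))).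
    apply: ler_prod => i _; apply/andP; split.
      by rewrite invr_ge0 subr_ge0 ltW.
    exact: factor_bound.
  rewrite big_split /=.
  apply: ler_pM.
  - by apply: prodr_ge0 => i _; case: ifP => _ //; rewrite (le_trans ler01).
  - by apply: prodr_ge0 => i _; exact: powR_ge0.
  - rewrite -big_mkcond /=.
    have -> : \prod_(i | (p i < B)%N) c = \prod_(i in [pred i | (p i < B)%N]) c.
      by apply: eq_bigl => i; rewrite inE.
    rewrite prodr_const; apply: ler_weXn2l => //.
    pose f (i : 'I_n) : 'I_B.+1 := inord (p i).
    have fi : {in [pred i | (p i < B)%N] &, injective f}.
      move=> i j; rewrite !inE => hi hj /(congr1 val) /=.
      rewrite /f !inordK ?(ltn_trans hi) ?(ltn_trans hj) // => h.
      apply: val_inj => /=; apply/eqP; rewrite -(nth_uniq 0%N _ _ (primes_uniq q)) //.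
      by apply/eqP.
    rewrite -(card_in_imset fi).
    by apply: (leq_trans (max_card _)); rewrite card_ord.
  - rewrite -powR_prod; last by move=> i; exact: ler0n.
    apply: ge0_ler_powR; [exact: ltW | by rewrite nnegrE prodr_ge0 | by rewrite nnegrE |].
    rewrite -natr_prod ler_nat.
    have dqq : divpinf q q by apply/allP => x; rewrite mem_primes => /and3P[_ _ ->].
    rewrite -[X in (_ <= X)%N](@decomp_idx q q q0 q0 dqq).
    apply: leq_prod => i _.
    rewrite -[X in (X <= _)%N]expn1; apply: leq_pexp2l.
      exact: (leq_trans _ (p2 i)).
    by rewrite logn_gt0 mem_nth.
apply: (le_trans step1).
rewrite (mulrC (c ^+ B.+1)) -mulrA.
apply: ler_wpM2l; first exact: powR_ge0.
exact: le_trans step2 step3.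
Qed.
End Count.

Section Meas.
Local Open Scope classical_set_scope.
Variable R : realType.
Local Notation mu := (@lebesgue_measure R).

Lemma le_int_T (f g : R -> \bar R) : (forall x, (0 <= f x)%E) ->
  (forall x, (f x <= g x)%E) ->
  (\int[mu]_(x in setT) f x <= \int[mu]_(x in setT) g x)%E.
Proof.
move=> f0 fg.
have g0 x : (0 <= g x)%E by apply: le_trans (fg x).
rewrite ge0_integralTE // ge0_integralTE //.
apply: ereal_sup_le => _ [h /= hf <-]; exists h => //= x.
exact: le_trans (hf x) (fg x).
Qed.

Lemma mem_bigsetU (F : nat -> set R) (n a : nat) (x : R) : (a < n)%N -> F a x ->
  (\big[setU/set0]_(i < n) F i) x.
Proof.
elim: n => [//|n IH] an Fx.
rewrite big_ord_recr /=.
move: an; rewrite ltnS leq_eqVlt => /orP[/eqP <-|an]; first by right.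
by left; apply: IH.
Qed.

Lemma majarc_int (k q : nat) (Q P K : R) (F : R -> R) : (0 < q)%N -> 0 <= K ->
  0 <= Q * P ^- k ->
  (forall x, majarc k q Q P x -> 0 <= F x <= K) ->
  (\int[mu]_(x in majarc k q Q P) (F x)%:E <= (K * (4 * (Q * P ^- k)))%:E)%E.
Proof.
move=> q0 K0 w0 FK.
set w := Q * P ^- k.
pose I (a : nat) : set R := `[(a%:R - w) / q%:R, (a%:R + w) / q%:R].
pose U := \big[setU/set0]_(a < q.+1) I a.
have mI a : measurable (I a) by exact: measurable_itv.
have mU : measurable U by apply: bigsetU_measurable => a _.
have sub : majarc k q Q P `<=` U.
  move=> x [_ [a [aq _ hx]]].
  apply: (@mem_bigsetU I q.+1 a); first by rewrite ltnS.
  have q0' : 0 < (q%:R : R) by rewrite ltr0n.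
  move: hx; rewrite ler_norml => /andP[h1 h2].
  rewrite /I /= in_itv /=; apply/andP; split.
    rewrite ler_pdivrMr // /w; lra.
  rewrite ler_pdivlMr // /w; lra.
rewrite integral_mkcond.
apply: (@le_trans _ _ (\int[mu]_(x in setT) (K * \1_U x)%:E)%E).
  apply: le_int_T.
    move=> x; rewrite patchE; case: ifP => // /set_mem h.
    by have /andP[] := FK x h.
  move=> x; rewrite patchE indicE; case: ifP => [/set_mem h|_].
    have /andP[_ FxK] := FK x h.
    rewrite mem_set; last exact: sub.
    by rewrite (_ : true%:R = 1) // mulr1 lee_fin.
  rewrite (_ : (point : \bar R) = 0%E) //.
  by rewrite lee_fin mulr_ge0 // ler0n.
have := integralZl_indic (m := mu) (D := setT) measurableT (fun _ : R => U) K.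
rewrite /= => ->; last 2 first.
- by move=> /lt_le_trans /(_ K0); rewrite ltxx.
- exact: mU.
rewrite integral_indic // setIT.
have q1 : 1 <= (q%:R : R) by rewrite ler1n.
have hI a : (mu (I a) <= (2 * w / q%:R)%:E)%E.
  rewrite /I lebesgue_measure_itv /=; case: ifP => _; last by rewrite lee_fin mulr_ge0 // ?invr_ge0 // mulr_ge0.
  rewrite -EFinD lee_fin le_eqVlt; apply/orP; left; apply/eqP.
  field; by rewrite gt_eqF // (lt_le_trans ltr01).
have hU : (mu U <= (4 * w)%:E)%E.
  apply: le_trans (@content_subadditive _ _ _ mu U I q.+1 (fun k _ => mI k) mU (fun x h => h)) _.
  apply: (@le_trans _ _ (\sum_(k < q.+1) (2 * w / q%:R)%:E)%E).
    by apply: lee_sum => i _; exact: hI.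
  rewrite sumEFin lee_fin sumr_const card_ord -[_ *+ q.+1]mulr_natr -[(q.+1)%:R]natr1.
  have hinv : (q%:R : R) * q%:R^-1 = 1 by rewrite mulfV // gt_eqF // (lt_le_trans ltr01).
  have hq : w * q%:R^-1 <= w.
    rewrite -[leRHS]mulr1 ler_wpM2l // invf_le1 //; by apply: lt_le_trans ltr01 q1.
  have q0'' : (q%:R : R) != 0 by rewrite gt_eqF // (lt_le_trans ltr01).
  have -> : 2 * w / q%:R * (q%:R + 1) = 2 * w + 2 * (w / q%:R) by field.
  lra.
rewrite EFinM; apply: lee_wpmul2l; by rewrite ?lee_fin.
Qed.
End Meas.

Section Main.
Variable R : realType.

Lemma normc_sum (I : Type) (r : seq I) (P : pred I) (F : I -> R[i]) :
  Normc.normc (\sum_(i <- r | P i) F i) <= \sum_(i <- r | P i) Normc.normc (F i).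
Proof.
elim/big_rec2: _ => [|i y1 y2 _ H]; first by rewrite Normc.normc0.
apply: le_trans (le_normcD _ _) _; by rewrite lerD2l.
Qed.

Lemma normc_ee (z : R) : Normc.normc (ee z) = 1.
Proof. by rewrite /Normc.normc /ee cos2Dsin2 sqrtr1. Qed.

Lemma fdag_bound (d Cc : R) k q alpha P M Rb :
  (forall q N : nat, (0 < q)%N ->
     \sum_(u < N.+1 | (0 < u)%N && divpinf u q) (1 : R) <= Cc * (N%:R `^ d) * (q%:R `^ d)) ->
  (0 < q)%N -> 1 <= P -> 1 <= M -> 0 <= d -> 0 <= Cc ->
  Normc.normc (fdag k q alpha P M Rb) <= M * (Cc * P `^ d * q%:R `^ d).
Proof.
move=> hC q0 P1 M1 d0 C0.
set X := Cc * P `^ d * q%:R `^ d.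
have X0 : 0 <= X by rewrite mulr_ge0 ?powR_ge0 // mulr_ge0 // powR_ge0.
rewrite /fdag; apply: le_trans (normc_sum _ _ _ _) _.
have inner (v : 'I_(Num.truncn M).+1) : inA M Rb v && coprime v q ->
    Normc.normc (\sum_(u < (Num.truncn (P / v%:R)).+1 | inC q (P / v%:R) Rb u)
      ee (alpha * ((u * v)%N%:R) ^+ k)) <= X.
  move=> /andP[/and3P[v0 _ _] _].
  apply: le_trans (normc_sum _ _ _ _) _.
  under eq_bigr do rewrite normc_ee.
  set T := Num.truncn (P / v%:R).
  apply: (@le_trans _ _ (\sum_(u < T.+1 | (0 < u)%N && divpinf u q) (1 : R))).
    rewrite [leLHS]big_mkcond [leRHS]big_mkcond /=; apply: ler_sum => u _.
    have h : inC q (P / v%:R) Rb u -> (0 < u)%N && divpinf u q.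
      by rewrite /inC /inA => /andP[/and3P[-> _ _] ->].
    case: ifP => [/h -> //|_]; case: ifP => _ //; exact: ler01.
  apply: le_trans (hC q T q0) _.
  rewrite /X ler_wpM2r ?powR_ge0 // ler_wpM2l //.
  have v1 : 1 <= (v%:R : R) by rewrite ler1n.
  have Pv0 : 0 <= P / v%:R by rewrite divr_ge0 // (le_trans ler01).
  have TP : T%:R <= P.
    apply: (@le_trans _ _ (P / v%:R)).
      by rewrite -truncn_ge_nat.
    rewrite ler_pdivrMr ?(lt_le_trans ltr01) //.
    by rewrite -[leLHS]mulr1 ler_wpM2l // (le_trans ler01).
  apply: ge0_ler_powR; [exact: d0 | by rewrite nnegrE | by rewrite nnegrE (le_trans ler01) |].
  exact: TP.
apply: (@le_trans _ _ (\sum_(v < (Num.truncn M).+1 | inA M Rb v && coprime v q) X)).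
  by apply: ler_sum => v hv; apply: inner.
rewrite big_mkcond big_ord_recl /=.
rewrite add0r.
apply: (@le_trans _ _ (\sum_(i < Num.truncn M) X)).
  by apply: ler_sum => i _; case: ifP.
rewrite sumr_const card_ord -mulr_natl ler_wpM2r //.
by rewrite -truncn_ge_nat // (le_trans ler01).
Qed.

End Main.

Theorem lemma3p2 (R : realType) (k : nat) (s : R) :
  (1 <= k)%N -> 0 < s ->
  forall eps : R, 0 < eps ->
  exists eta : R, 0 < eta /\
  exists C : R, 0 < C /\
  exists P0 : R, forall P : R, P0 <= P ->
  forall Rb : R, 2 <= Rb -> Rb <= P `^ eta ->
  forall M : R, 1 <= M ->
  forall Q : R, 1 <= Q -> Q <= P `^ (k%:R / 2) ->
  forall q : nat, (1 <= q)%N -> q%:R <= Q ->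
  (\int[@lebesgue_measure R]_(alpha in majarc k q Q P)
      ((Normc.normc (fdag k q alpha P M Rb)) `^ s)%:E
   <= (C * Q * M `^ s * P `^ (eps - k%:R))%:E)%E.
Proof.
move=> k1 s0 eps eps0.
have k0 : 0 <= (k%:R : R) by exact: ler0n.
pose d := eps / (s * (1 + k%:R / 2)).
have hk : 0 < 1 + k%:R / 2 :> R by rewrite ltr_pwDl // divr_ge0.
have d0 : 0 < d by rewrite divr_gt0 // mulr_gt0.
have [Cc [Cc0 hC]] := @count_bound R d d0.
exists 1; split => //.
exists (4 * Cc `^ s); split; first by rewrite mulr_gt0 // powR_gt0.
exists 1 => P P1 Rb _ _ M M1 Q Q1 QP q q1 qQ.
have P0 : 0 < P by apply: lt_le_trans P1.
have M0 : 0 < M by apply: lt_le_trans M1.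
set Y := M * (Cc * P `^ (eps / s)).
have Y0 : 0 <= Y by apply: mulr_ge0; [exact: ltW | apply: mulr_ge0; [exact: ltW | exact: powR_ge0]].
have hf alpha : Normc.normc (fdag k q alpha P M Rb) <= Y.
  apply: le_trans (@fdag_bound R d Cc k q alpha P M Rb hC q1 P1 M1 (ltW d0) (ltW Cc0)) _.
  rewrite /Y; apply: ler_wpM2l; first exact: ltW.
  rewrite -mulrA; apply: ler_wpM2l; first exact: ltW.
  have qd : q%:R `^ d <= P `^ (k%:R / 2 * d).
    rewrite [X in _ <= X]powRrM; apply: ge0_ler_powR; [exact: ltW | by rewrite nnegrE | by rewrite nnegrE powR_ge0 |].
    exact: le_trans qQ QP.
  apply: (@le_trans _ _ (P `^ d * P `^ (k%:R / 2 * d))).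
    by apply: ler_wpM2l; first exact: powR_ge0.
  rewrite -powRD; last by rewrite (gt_eqF P0) implybT.
  have -> : d + k%:R / 2 * d = eps / s.
    by rewrite /d; field; rewrite !gt_eqF.
  exact: lexx.
set K := Y `^ s.
have K0 : 0 <= K by exact: powR_ge0.
have w0 : 0 <= Q * P ^- k by rewrite mulr_ge0 ?invr_ge0 ?exprn_ge0 ?ltW // (lt_le_trans ltr01).
apply: le_trans (@majarc_int R k q Q P K (fun alpha => Normc.normc (fdag k q alpha P M Rb) `^ s) q1 K0 w0 _) _.
  move=> x _; rewrite powR_ge0 /=.
  apply: ge0_ler_powR; [exact: ltW | rewrite nnegrE; case: (fdag k q x P M Rb) => a b; exact: sqrtr_ge0 | by rewrite nnegrE | exact: hf].
rewrite lee_fin.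
have -> : K = M `^ s * Cc `^ s * P `^ eps.
  rewrite /K /Y powRM; last 2 first.
  - exact: ltW.
  - by apply: mulr_ge0; [exact: ltW | exact: powR_ge0].
  rewrite powRM; last 2 first.
  - exact: ltW.
  - exact: powR_ge0.
  by rewrite -powRrM divfK ?gt_eqF // mulrA.
have -> : P `^ (eps - k%:R) = P `^ eps * (P ^+ k)^-1.
  rewrite powRB; last by rewrite (gt_eqF P0) implybT.
  by rewrite powR_mulrn // ltW.
rewrite le_eqVlt; apply/orP; left; apply/eqP; ring.
Qed.
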